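(* Let $P=\Bbbk[x_1,x_2,x_3]$ with Poisson bracket $\{x_1,x_2\}=x_2^2$, $\{x_2,x_3\}=3x_1^2$, $\{x_3,x_1\}=2x_2x_3$. Then $\mathrm{PAut}_{\mathrm{gr}}(P)=\{a\cdot\mathrm{id}: a\in\Bbbk^\times\}$, i.e. every graded Poisson automorphism acts on $P_1$ as a nonzero scalar, and $P$ has no Poisson reflections.
   Context: $\Bbbk$ is algebraically closed of characteristic $0$; $P$ has the standard grading. A graded Poisson automorphism is a degree-preserving bijective algebra homomorphism preserving the bracket. A Poisson reflection is a finite-order graded Poisson automorphism $\phi$ with $\phi|_{P_1}$ having eigenvalues $1,1,\xi$ for a primitive root of unity $\xi\neq1$. *)

(* Defs.v *)
From HB Require Import structures.
From mathcomp Require Import all_boot all_order all_algebra.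
From mathcomp Require Import mpoly.
Set Implicit Arguments. Unset Strict Implicit. Unset Printing Implicit Defensive.
Import Order.TTheory GRing.Theory Num.Theory.
Local Open Scope ring_scope.

(* Variables x1, x2, x3 are 'X_0, 'X_1, 'X_2 in {mpoly F[3]}. *)

Definition genbr (F : fieldType) (i j : 'I_3) : {mpoly F[3]} :=
  let x1 : {mpoly F[3]} := 'X_(@Ordinal 3 0 isT) in
  let x2 : {mpoly F[3]} := 'X_(@Ordinal 3 1 isT) in
  let x3 : {mpoly F[3]} := 'X_(@Ordinal 3 2 isT) in
  match nat_of_ord i, nat_of_ord j with
  | 0, 1 => x2 ^+ 2
  | 1, 0 => - x2 ^+ 2
  | 1, 2 => 3%:R * x1 ^+ 2
  | 2, 1 => - (3%:R * x1 ^+ 2)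
  | 2, 0 => 2%:R * x2 * x3
  | 0, 2 => - (2%:R * x2 * x3)
  | _, _ => 0
  end.

Definition pbr (F : fieldType) (f g : {mpoly F[3]}) : {mpoly F[3]} :=
  \sum_(i < 3) \sum_(j < 3) mderiv i f * mderiv j g * genbr F i j.

Definition graded_poisson_aut (F : fieldType) (phi : {mpoly F[3]} -> {mpoly F[3]}) : Prop :=
  [/\ (forall (a : F) (p q : {mpoly F[3]}), phi (a *: p + q) = a *: phi p + phi q),
      (forall p q : {mpoly F[3]}, phi (p * q) = phi p * phi q) /\ phi 1 = 1,
      bijective phi,
      (forall (d : nat) (p : {mpoly F[3]}), p \is d.-homog -> phi p \is d.-homog)
    & (forall f g : {mpoly F[3]}, phi (pbr f g) = pbr (phi f) (phi g))].

Definition matP1 (F : fieldType) (phi : {mpoly F[3]} -> {mpoly F[3]}) : 'M[F]_3 :=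
  \matrix_(i < 3, j < 3) (phi 'X_j)@_(mnm1 i).

Definition poisson_reflection (F : fieldType) (phi : {mpoly F[3]} -> {mpoly F[3]}) : Prop :=
  [/\ graded_poisson_aut phi,
      (exists2 n : nat, (0 < n)%N & forall p, iter n phi p = p)
    & exists xi : F, [/\ xi != 1, (exists m : nat, m.-primitive_root xi) &
        char_poly (matP1 phi) = ('X - 1) ^+ 2 * ('X - xi%:P)]].

(* Main.v *)
Require Import Defs.
From HB Require Import structures.
From mathcomp Require Import all_boot all_order all_algebra.
From mathcomp Require Import mpoly.
From mathcomp Require Import ring.
Import Order.TTheory GRing.Theory Num.Theory.
Local Open Scope ring_scope.

Notation i0 := (@Ordinal 3 0 isT).
Notation i1 := (@Ordinal 3 1 isT).
Notation i2 := (@Ordinal 3 2 isT).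

Lemma sum3 (R : nmodType) (F : 'I_3 -> R) : \sum_(i < 3) F i = F i0 + F i1 + F i2.
Proof.
rewrite !big_ord_recl big_ord0 addr0 addrA.
by congr (F _ + F _ + F _); apply: val_inj.
Qed.

Lemma ord3P (P : 'I_3 -> Prop) : P i0 -> P i1 -> P i2 -> forall i, P i.
Proof.
move=> h0 h1 h2 [[|[|[|n]]] hn] //.
- by rewrite (_ : Ordinal hn = i0) //; apply: val_inj.
- by rewrite (_ : Ordinal hn = i1) //; apply: val_inj.
- by rewrite (_ : Ordinal hn = i2) //; apply: val_inj.
Qed.

Definition pt {R : Type} (x y z : R) (i : 'I_3) : R :=
  match nat_of_ord i with 0 => x | 1 => y | _ => z end.

Section S.
Variable k : fieldType.
Implicit Types p q : {mpoly k[3]}.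

Lemma mderivXU (i j : 'I_3) : mderiv i ('X_j : {mpoly k[3]}) = (j == i)%:R%:MP.
Proof.
rewrite mderivX mnm1E.
case: eqP => [->|_]; last by rewrite scale0r.
have -> : (U_(i) - U_(i) = 0 :> 'X_{1..3})%MM by apply/mnmP => l; rewrite mnmBE subnn mnm0E.
by rewrite scale1r mpolyX0.
Qed.

Lemma pbrXX (i j : 'I_3) : pbr ('X_i : {mpoly k[3]}) 'X_j = genbr k i j.
Proof.
rewrite /pbr (bigD1 i) //= [X in _ + X](_ : _ = 0) ?addr0; last first.
  apply: big1 => a hai.
  by apply: big1 => b _; rewrite mderivXU eq_sym (negbTE hai) /= mpolyC0 !mul0r.
rewrite mderivXU eqxx /= mpolyC1. rewrite (bigD1 j) //= [X in _ + X](_ : _ = 0) ?addr0; last first.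
  by apply: big1 => b hb; rewrite !mderivXU eq_sym (negbTE hb) /= mpolyC0 mulr0 mul0r.
by rewrite !mderivXU eqxx /= mpolyC1 !mul1r.
Qed.

Definition L (a b c : k) : {mpoly k[3]} := a *: 'X_i0 + b *: 'X_i1 + c *: 'X_i2.

Lemma meval_pbrL (x y z a1 a2 a3 b1 b2 b3 : k) :
  meval (pt x y z) (pbr (L a1 a2 a3) (L b1 b2 b3)) =
  (a1*b2 - a2*b1) * y^+2 + (a2*b3 - a3*b2) * 3%:R * x^+2 + (a3*b1 - a1*b3) * 2%:R * y * z.
Proof.
rewrite /pbr sum3 !sum3 /L !mderivD !mderivZ !mderivXU /genbr /=.
rewrite !(mevalD, mevalM, mevalZ, mevalC, mevalN, mevalXU, meval0) /pt /=.
by ring.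
Qed.

Lemma meval_L x y z a b c : meval (pt x y z) (L a b c) = a * x + b * y + c * z.
Proof. by rewrite /L !(mevalD, mevalZ, mevalXU). Qed.

Lemma mcoeff_L a b c m : (L a b c)@_m =
  a * ((U_(i0))%MM == m)%:R + b * ((U_(i1))%MM == m)%:R + c * ((U_(i2))%MM == m)%:R.
Proof. by rewrite /L !(mcoeffD, mcoeffZ, mcoeffX). Qed.

Lemma homog1_L p : p \is 1.-homog -> p = L p@_(U_(i0))%MM p@_(U_(i1))%MM p@_(U_(i2))%MM.
Proof.
move=> hp; apply/mpolyP => m; rewrite mcoeff_L.
have [/mdeg1P [j /eqP ->]|hm] := boolP (mdeg m == 1%N).
  elim/ord3P: j; rewrite !eq_mnm1 /=; ring.
rewrite (dhomog_nemf_coeff hp hm).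
have ne : forall i : 'I_3, (U_(i)%MM == m) = false.
  by move=> i; apply/negbTE; apply: contra hm => /eqP <-; rewrite mdeg1.
by rewrite !ne /=; ring.
Qed.

Variable phi : {mpoly k[3]} -> {mpoly k[3]}.
Hypothesis hlin : forall (a : k) (p q : {mpoly k[3]}), phi (a *: p + q) = a *: phi p + phi q.
Hypothesis hM : forall p q, phi (p * q) = phi p * phi q.

Lemma phiD p q : phi (p + q) = phi p + phi q.
Proof. by have := hlin 1 p q; rewrite !scale1r. Qed.
Lemma phi0 : phi 0 = 0.
Proof. have h := phiD 0 0; rewrite addr0 in h; apply: (addrI (phi 0)); by rewrite -h addr0. Qed.
Lemma phiZ a p : phi (a *: p) = a *: phi p.
Proof. by rewrite -(addr0 (a *: p)) hlin phi0 addr0. Qed.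
Lemma phiN p : phi (- p) = - phi p.
Proof. by rewrite -scaleN1r phiZ scaleN1r. Qed.
Lemma phi_nat n p : phi (n%:R * p) = n%:R *: phi p.
Proof. by rewrite -mpolyC_nat mul_mpolyC phiZ. Qed.

End S.
Arguments L {k}.
Arguments phi0 {k phi}.
Arguments phiD {k phi}.
Arguments phiZ {k phi}.
Arguments phiN {k phi}.
Arguments phi_nat {k phi}.
Lemma alg (k : fieldType) (h2 : 2%:R != 0 :> k) (h3 : 3%:R != 0 :> k)
  (u1 u2 u3 v1 v2 v3 w1 w2 w3 : k)
  (inj : forall c1 c2 c3 : k, c1*u1 + c2*v1 + c3*w1 = 0 -> c1*u2 + c2*v2 + c3*w2 = 0 ->
          c1*u3 + c2*v3 + c3*w3 = 0 -> [/\ c1 = 0, c2 = 0 & c3 = 0])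
  (E1 : forall x y z : k, (u1*v2 - u2*v1) * y^+2 + (u2*v3 - u3*v2) * 3%:R * x^+2
          + (u3*v1 - u1*v3) * 2%:R * y * z = (v1*x + v2*y + v3*z)^+2)
  (E2 : forall x y z : k, (v1*w2 - v2*w1) * y^+2 + (v2*w3 - v3*w2) * 3%:R * x^+2
          + (v3*w1 - v1*w3) * 2%:R * y * z = 3%:R * (u1*x + u2*y + u3*z)^+2)
  (E3 : forall x y z : k, (w1*u2 - w2*u1) * y^+2 + (w2*u3 - w3*u2) * 3%:R * x^+2
          + (w3*u1 - w1*u3) * 2%:R * y * z = 2%:R * ((v1*x + v2*y + v3*z) * (w1*x + w2*y + w3*z))) :
  [/\ u2 = 0, u3 = 0, v1 = 0, v3 = 0 & [/\ w1 = 0, w2 = 0, v2 = u1, w3 = u1 & u1 != 0]].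
Proof.
have sq0 : forall a : k, a ^+ 2 = 0 -> a = 0 by move=> a /eqP; rewrite expf_eq0 /= => /eqP.
have c2 : forall a : k, 2%:R * a = 0 -> a = 0.
  by move=> a /eqP; rewrite mulf_eq0 (negbTE h2) /= => /eqP.
have c3 : forall a : k, 3%:R * a = 0 -> a = 0.
  by move=> a /eqP; rewrite mulf_eq0 (negbTE h3) /= => /eqP.
have m0 : forall a b : k, a * b = 0 -> a = 0 \/ b = 0.
  by move=> a b /eqP; rewrite mulf_eq0 => /orP [] /eqP; [left|right].
have hv3 : v3 = 0.
  apply: sq0; transitivity ((v1*0 + v2*0 + v3*1)^+2); first by ring.
  by rewrite -E1; ring.
have hu3 : u3 = 0.
  apply: sq0; apply: c3.
  transitivity (3%:R * (u1*0 + u2*0 + u3*1)^+2); first by ring.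
  by rewrite -E2; ring.
subst u3 v3.
have f3 : 2%:R * 3%:R * (u1 * u2) = 0.
  transitivity (3%:R * (u1*1 + u2*1 + 0*0)^+2 - 3%:R * (u1*1 + u2*0 + 0*0)^+2
     - 3%:R * (u1*0 + u2*1 + 0*0)^+2); first by ring.
  by rewrite -!E2; ring.
have f4 : 2%:R * (v1 * w3) = 0.
  transitivity (2%:R * ((v1*1 + v2*0 + 0*1) * (w1*1 + w2*0 + w3*1))
     - 2%:R * ((v1*1 + v2*0 + 0*0) * (w1*1 + w2*0 + w3*0))
     - 2%:R * ((v1*0 + v2*0 + 0*1) * (w1*0 + w2*0 + w3*1))); first by ring.
  by rewrite -!E3; ring.
have f5 : 2%:R * (v2 * w1 + v1 * w2) = 0.
  transitivity (2%:R * ((v1*1 + v2*1 + 0*0) * (w1*1 + w2*1 + w3*0))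
     - 2%:R * ((v1*1 + v2*0 + 0*0) * (w1*1 + w2*0 + w3*0))
     - 2%:R * ((v1*0 + v2*1 + 0*0) * (w1*0 + w2*1 + w3*0))); first by ring.
  by rewrite -!E3; ring.
have f6 : u1 * v2 - u2 * v1 = v2 ^+ 2.
  transitivity ((u1*v2 - u2*v1) * 1^+2 + (u2*0 - 0*v2) * 3%:R * 0^+2
          + (0*v1 - u1*0) * 2%:R * 1 * 0); first by ring.
  by rewrite E1; ring.
have f7 : 3%:R * (v2 * w3) = 3%:R * u1 ^+ 2.
  transitivity ((v1*w2 - v2*w1) * 0^+2 + (v2*w3 - 0*w2) * 3%:R * 1^+2
          + (0*w1 - v1*w3) * 2%:R * 0 * 0); first by ring.
  by rewrite E2; ring.
have f8 : w1 * u2 - w2 * u1 = 2%:R * (v2 * w2).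
  transitivity ((w1*u2 - w2*u1) * 1^+2 + (w2*0 - w3*u2) * 3%:R * 0^+2
          + (w3*u1 - w1*0) * 2%:R * 1 * 0); first by ring.
  by rewrite E3; ring.
have f7' : v2 * w3 = u1 ^+ 2.
  by apply/eqP; rewrite -subr_eq0; apply/eqP/c3; rewrite mulrBr f7 subrr.
have hv2 : v2 != 0.
  apply/eqP => hv2; subst v2.
  have hu1 : u1 = 0 by apply: sq0; rewrite -f7' mul0r.
  subst u1.
  have [hu2|hv1] : u2 = 0 \/ v1 = 0 by apply: m0; apply/eqP; rewrite -oppr_eq0; apply/eqP; rewrite -[RHS](expr0n _ 2) -f6; ring.
  - have [] : [/\ (1:k) = 0, (0:k) = 0 & (0:k) = 0] by apply: inj; rewrite ?hu2; ring.
    by move=> /eqP; rewrite oner_eq0.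
  - have [] : [/\ (0:k) = 0, (1:k) = 0 & (0:k) = 0] by apply: inj; rewrite ?hv1; ring.
    by move=> _ /eqP; rewrite oner_eq0.
have hw3 : w3 != 0.
  apply/eqP => hw3; subst w3.
  have [] : [/\ v1*w2 - v2*w1 = 0, w1*u2 - w2*u1 = 0 & u1*v2 - u2*v1 = 0] by apply: inj; ring.
  move=> _ _ /eqP; rewrite f6 expf_eq0 /= => /eqP hv20.
  by rewrite hv20 eqxx in hv2.
have hv1 : v1 = 0.
  have [//|/eqP] := m0 _ _ (c2 _ f4); by rewrite (negbTE hw3).
subst v1.
have hu1 : u1 != 0.
  apply/eqP => hu1; move: f7'; rewrite hu1 expr0n /= => /eqP; rewrite mulf_eq0.
  by rewrite (negbTE hv2) (negbTE hw3).
have hu2 : u2 = 0.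
  have [/eqP|//] := m0 _ _ (c3 _ (c2 _ (etrans (mulrA _ _ _) f3))); by rewrite (negbTE hu1).
subst u2.
have e1 : v2 = u1.
  apply/eqP; rewrite -subr_eq0; apply/eqP.
  have : v2 * (v2 - u1) = 0 by rewrite mulrBr -expr2 -f6; ring.
  by move/m0 => [/eqP|//]; rewrite (negbTE hv2).
subst v2.
have e2 : w3 = u1.
  apply/eqP; rewrite -subr_eq0; apply/eqP.
  have : u1 * (w3 - u1) = 0 by rewrite mulrBr f7' -expr2 subrr.
  by move/m0 => [/eqP|//]; rewrite (negbTE hu1).
subst w3.
have hw1 : w1 = 0.
  have : u1 * w1 = 0 by apply: c2; rewrite -f5; ring.
  by move/m0 => [/eqP|//]; rewrite (negbTE hu1).
subst w1.
have hw2 : w2 = 0.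
  have : u1 * w2 = 0.
    apply: c3; apply/eqP; rewrite -oppr_eq0; apply/eqP.
    by transitivity (0 * 0 - w2 * u1 - 2%:R * (u1 * w2)); [ring | rewrite f8 subrr].
  by move/m0 => [/eqP|//]; rewrite (negbTE hu1).
by subst w2; split.
Qed.

Lemma part1 (k : fieldType) (hchar : [pchar k] =i pred0)
  (phi : {mpoly k[3]} -> {mpoly k[3]}) : graded_poisson_aut phi ->
  exists2 a : k, a != 0 & forall i : 'I_3, phi 'X_i = a *: 'X_i.
Proof.
case=> hlin [hM h1] hbij hhom hP.
have h2 : 2%:R != 0 :> k by move/pcharf0P: hchar => ->.
have h3 : 3%:R != 0 :> k by move/pcharf0P: hchar => ->.
have hr : forall j : 'I_3, exists u1 u2 u3, phi 'X_j = L u1 u2 u3.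
  move=> j; do 3 eexists; apply: homog1_L; apply: hhom.
  rewrite dhomogX; apply/eqP; apply: mdeg1.
have [u1 [u2 [u3 hu]]] := hr i0.
have [v1 [v2 [v3 hv]]] := hr i1.
have [w1 [w2 [w3 hw]]] := hr i2.
have := @alg k h2 h3 u1 u2 u3 v1 v2 v3 w1 w2 w3.
case.
- move=> c1 c2 c3 H1 H2 H3.
  have e : phi (c1 *: 'X_i0 + c2 *: 'X_i1 + c3 *: 'X_i2) = phi 0.
    rewrite (phi0 hlin) !(phiD hlin) !(phiZ hlin) hu hv hw.
    apply/mpolyP => m; rewrite !(mcoeffD, mcoeffZ, mcoeff_L) mcoeff0.
    transitivity ((c1*u1 + c2*v1 + c3*w1) * ((U_(i0))%MM == m)%:R
      + (c1*u2 + c2*v2 + c3*w2) * ((U_(i1))%MM == m)%:R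
      + (c1*u3 + c2*v3 + c3*w3) * ((U_(i2))%MM == m)%:R); first by ring.
    by rewrite H1 H2 H3; ring.
  have e' := bij_inj hbij e.
  have := congr1 (mcoeff (U_(i0))%MM) e'; have := congr1 (mcoeff (U_(i1))%MM) e';
  have := congr1 (mcoeff (U_(i2))%MM) e'.
  rewrite !(mcoeffD, mcoeffZ, mcoeffXU) !mcoeff0 /=.
  move=> e3 e2 e1; split.
  + by rewrite -e1; ring.
  + by rewrite -e2; ring.
  + by rewrite -e3; ring.
- move=> x y z; have := congr1 (meval (pt x y z)) (hP 'X_i0 'X_i1).
  rewrite pbrXX /genbr /= expr2 hM hu hv meval_pbrL mevalM !meval_L => <-; ring.
- move=> x y z; have := congr1 (meval (pt x y z)) (hP 'X_i1 'X_i2).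
  rewrite pbrXX /genbr /= expr2 (phi_nat hlin) hM hu hv hw meval_pbrL mevalZ mevalM !meval_L => <-; ring.
- move=> x y z; have := congr1 (meval (pt x y z)) (hP 'X_i2 'X_i0).
  rewrite pbrXX /genbr /= hM (phi_nat hlin) hu hv hw meval_pbrL mevalM mevalZ !meval_L => <-; ring.
move=> hu2 hu3 hv1 hv3 [hw1 hw2 hv2 hw3 hu1].
rewrite hu2 hu3 in hu; rewrite hv1 hv3 hv2 in hv; rewrite hw1 hw2 hw3 in hw.
exists u1 => // i; elim/ord3P: i; rewrite ?hu ?hv ?hw /L !scale0r ?addr0 ?add0r //.
Qed.
Theorem lemma3p5p1 (k : closedFieldType) (hchar : [pchar k] =i pred0) :
  (forall phi : {mpoly k[3]} -> {mpoly k[3]}, graded_poisson_aut phi ->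
     exists2 a : k, a != 0 & forall i : 'I_3, phi 'X_i = a *: 'X_i)
  /\ (forall phi : {mpoly k[3]} -> {mpoly k[3]}, ~ poisson_reflection phi).
Proof.
split; first by move=> phi; apply: part1.
move=> phi [hg _ [xi [hxi1 _ hcp]]].
have [a ha hX] := @part1 k hchar phi hg.

have hm : matP1 phi = a%:M.
  apply/matrixP => i j; rewrite !mxE hX mcoeffZ mcoeffXU eq_sym.
  by case: eqP => _ /=; rewrite ?mulr1 ?mulr0.
rewrite hm /char_poly /char_poly_mx map_scalar_mx -raddfB det_scalar /= in hcp.
have e1 := congr1 (horner^~ 1) hcp.
have e2 := congr1 (horner^~ xi) hcp.
rewrite /= !hornerE in e1 e2.
rewrite subrr expr0n /= mul0r in e1.
move/eqP: e1; rewrite expf_eq0 /= subr_eq0 => /eqP ha1.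
rewrite -ha1 subrr mulr0 in e2.
move/eqP: e2; rewrite expf_eq0 /= subr_eq0 => hx.
by rewrite hx in hxi1.
Qed.
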